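(* Let $S,T$ be numberings of shape $\lambda\vdash n$, let $1\le i\le\ell(\lambda)-1$ and $1\le j\le\lambda_{i+1}$. Then \[ v_S^T=(-1)^j\sum_{U\in\Xi_{i,j}(S)}v_U^T . \]
   Context: Permutations in $\mathfrak S_n$ act on $[n]$, products are compositions $(\sigma\tau)(k)=\sigma(\tau(k))$. A numbering of shape $\lambda\vdash n$ is a filling of the Young diagram of $\lambda$ (rows indexed top to bottom; $\ell(\lambda)$ = number of rows) with $1,\dots,n$, each exactly once. For $\pi\in\mathfrak S_n$, $\pi\cdot T$ replaces each entry $k$ by $\pi(k)$; $\sigma_{T,S}$ is the unique permutation with $\sigma_{T,S}\cdot T=S$. $R(T)$, $C(T)$ are the row and column groups; $a_T=\sum_{\rho\in R(T)}\rho$, $b_T=\sum_{\zeta\in C(T)}\operatorname{sgn}(\zeta)\zeta$, and $v_S^T=\sigma_{S,T}\,b_S\,a_S\in\mathbb C[\mathfrak S_n]$. Let $J$ be the set of the first (leftmost) $j$ entries of row $i+1$ of $S$. The set $\Xi_{i,j}(S)$ consists of the numberings obtained from $S$, one for each $j$-element subset $B$ of the entries of row $i$ of $S$, by moving the entries of $J$ to the positions in row $i$ previously occupied by $B$ and the entries of $B$ to the positions in row $i+1$ previously occupied by $J$, preserving relative left-to-right order within each subset. *)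

(* Defs.v *)
From HB Require Import structures.
From mathcomp Require Import all_boot all_order all_algebra all_fingroup all_field.
Set Implicit Arguments. Unset Strict Implicit. Unset Printing Implicit Defensive.
Import GRing.Theory.
Local Open Scope ring_scope.

(* Entries 1..n of the paper are represented by 'I_n = {0,..,n-1}; rows are
   0-indexed.  A numbering is a list of rows (top to bottom), each row a list
   of entries (left to right). *)
Notation numbering n := (seq (seq 'I_n)).

Definition is_partition (n : nat) (lam : seq nat) : bool :=
  [&& sorted geq lam, all (fun k => 0 < k)%N lam & sumn lam == n].

(* T is a numbering of shape lam: rows of lengths lam, entries pairwise
   distinct (so, as sumn lam = n, each of 1..n occurs exactly once). *)
Definition is_numbering (n : nat) (lam : seq nat) (T : numbering n) : bool :=
  (shape T == lam) && uniq (flatten T).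

(* Paper's composition (sigma tau)(k) = sigma (tau k).  In MathComp,
   (s * t) x = t (s x), hence sigma o tau = tau * sigma. *)
Definition pcomp (n : nat) (s t : {perm 'I_n}) : {perm 'I_n} := (t * s)%g.

Definition pact (n : nat) (pi : {perm 'I_n}) (T : numbering n) : numbering n :=
  map (map pi) T.

Definition sigmaTS (n : nat) (T S : numbering n) : {perm 'I_n} :=
  if [pick s : {perm 'I_n} | pact s T == S] is Some s then s else 1%g.

Definition row_of (n : nat) (T : numbering n) (x : 'I_n) : nat :=
  find (fun r => x \in r) T.
Definition col_of (n : nat) (T : numbering n) (x : 'I_n) : nat :=
  index x (nth [::] T (row_of T x)).

Definition Rgrp (n : nat) (T : numbering n) : {set {perm 'I_n}} :=
  [set s : {perm 'I_n} | [forall x, row_of T (s x) == row_of T x]].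
Definition Cgrp (n : nat) (T : numbering n) : {set {perm 'I_n}} :=
  [set s : {perm 'I_n} | [forall x, col_of T (s x) == col_of T x]].

(* The group algebra C[S_n]: an element is its coefficient function. *)
Notation GA n := {ffun {perm 'I_n} -> algC}.

Definition gel (n : nat) (s : {perm 'I_n}) : GA n := [ffun p => (p == s)%:R].

Definition gmul (n : nat) (f g : GA n) : GA n :=
  [ffun p => \sum_(s : {perm 'I_n}) \sum_(t : {perm 'I_n} | pcomp s t == p)
               f s * g t].

Definition gscale (n : nat) (c : algC) (f : GA n) : GA n := [ffun p => c * f p].

Definition sgnp (n : nat) (s : {perm 'I_n}) : algC := (-1) ^+ odd_perm s.

Definition aT (n : nat) (T : numbering n) : GA n :=
  \sum_(r in Rgrp T) gel r.
Definition bT (n : nat) (T : numbering n) : GA n :=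
  \sum_(z in Cgrp T) gscale (sgnp z) (gel z).

Definition vST (n : nat) (S T : numbering n) : GA n :=
  gmul (gmul (gel (sigmaTS S T)) (bT S)) (aT S).

Fixpoint repl (A : Type) (m : bitseq) (r s : seq A) : seq A :=
  match m, r with
  | b :: m', x :: r' =>
      if b then head x s :: repl m' r' (behead s) else x :: repl m' r' s
  | _, _ => r
  end.

(* The element of Xi_{i,j}(S) associated with the set B of positions in
   (0-indexed) row i of S: J = first j entries of row i+1 are moved to the
   positions of B in row i, the entries at positions B are moved (in order)
   to the first j positions of row i+1. *)
Definition XiElt (n : nat) (S : numbering n) (i j : nat)
    (B : {set 'I_(size (nth [::] S i))}) : numbering n :=
  let r := nth [::] S i in
  let r' := nth [::] S i.+1 in
  let m := [seq k \in B | k <- enum 'I_(size r)] in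
  set_nth [::] (set_nth [::] S i (repl m r (take j r'))) i.+1
          (mask m r ++ drop j r').

Arguments XiElt {n} S i j B.

(* Main.v *)
Require Import Defs.
Set Warnings "-notation-overridden,-ambiguous-paths,-notation-incompatible-prefix".
From HB Require Import structures.
From mathcomp Require Import all_boot all_order all_algebra all_fingroup all_field.
From mathcomp Require Import zify.
Set Implicit Arguments. Unset Strict Implicit. Unset Printing Implicit Defensive.
Import GRing.Theory Num.Theory.
Local Open Scope ring_scope.

Lemma gelE n (s p : {perm 'I_n}) : gel s p = (p == s)%:R.
Proof. by rewrite ffunE. Qed.

Lemma aT_E n (S : numbering n) t : aT S t = (t \in Rgrp S)%:R.
Proof.
rewrite /aT sum_ffunE; case: (boolP (t \in Rgrp S)) => tR.
  rewrite (bigD1 t) //= ffunE eqxx big1 ?addr0 // => r /andP[_ rt].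
  by rewrite ffunE eq_sym (negbTE rt).
by rewrite big1 // => r rR; rewrite ffunE; case: eqP => // e; by rewrite e rR in tR.
Qed.

Lemma bT_E n (S : numbering n) t : bT S t = (t \in Cgrp S)%:R * sgnp t.
Proof.
rewrite /bT sum_ffunE; case: (boolP (t \in Cgrp S)) => tR.
  rewrite (bigD1 t) //= !ffunE eqxx big1 ?addr0 ?mul1r ?mulr1 // => r /andP[_ rt].
  by rewrite !ffunE eq_sym (negbTE rt) mulr0.
rewrite big1 ?mul0r // => r rR; rewrite !ffunE; case: eqP => [e|]; last by rewrite mulr0.
by rewrite e rR in tR.
Qed.

Lemma gmulE n (F G : GA n) p :
  gmul F G p = \sum_s \sum_(t | (t * s)%g == p) F s * G t.
Proof. by rewrite ffunE. Qed.

Lemma gmul_gel_l n (s : {perm 'I_n}) (G : GA n) p : gmul (gel s) G p = G (p * s^-1)%g.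
Proof.
rewrite gmulE (bigD1 s) //= [X in _ + X]big1 ?addr0; last first.
  by move=> s' ns; apply: big1 => t _; rewrite gelE (negbTE ns) mul0r.
rewrite gelE eqxx (big_pred1 (p * s^-1)%g) ?mul1r //.
by move=> t /=; apply/eqP/eqP => [<-|->]; rewrite ?mulgK ?mulgKV.
Qed.

Lemma vSTE n (S T : numbering n) p :
  vST S T p = \sum_(z in Cgrp S) \sum_(r in Rgrp S)
      sgnp z * ((r * (z * sigmaTS S T))%g == p)%:R.
Proof.
rewrite /vST gmulE (reindex_inj (mulIg (sigmaTS S T))) /=.
rewrite [in RHS]big_mkcond /=.
apply: eq_bigr => z _.
rewrite gmul_gel_l mulgK bT_E; case: (z \in Cgrp S); last first.
  by rewrite big1 // => t _; rewrite !mul0r.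
rewrite [RHS]big_mkcond [LHS]big_mkcond /=; apply: eq_bigr => t _; rewrite aT_E.
case: (t \in Rgrp S); case: eqP => _ /=; by rewrite ?mul1r ?mulr1 ?mul0r ?mulr0.
Qed.

Lemma pactM n (s t : {perm 'I_n}) (X : numbering n) :
  pact t (pact s X) = pact (s * t)%g X.
Proof.
rewrite /pact -map_comp; apply: eq_map => r /=; rewrite -map_comp.
by apply: eq_map => x /=; rewrite permM.
Qed.

Lemma row_of_pact n (q : {perm 'I_n}) (S : numbering n) x :
  row_of (pact q S) x = row_of S (q^-1 x)%g.
Proof.
rewrite /row_of /pact find_map; apply: eq_find => r /=.
by rewrite -{1}(permKV q x) mem_map //; apply: perm_inj.
Qed.

Lemma col_of_pact n (q : {perm 'I_n}) (S : numbering n) x :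
  col_of (pact q S) x = col_of S (q^-1 x)%g.
Proof.
rewrite /col_of row_of_pact; set k := row_of S _; rewrite /pact.
case: (ltnP k (size S)) => hk.
  by rewrite (nth_map [::]) // -{1}(permKV q x) index_map //; apply: perm_inj.
by rewrite !nth_default ?size_map.
Qed.

Lemma conj_back n (q z : {perm 'I_n}) : (q * (z ^ q) * q^-1)%g = z.
Proof. by rewrite conjgE !mulgA mulgV mul1g mulgK. Qed.

Lemma Rgrp_pact n (q : {perm 'I_n}) (S : numbering n) r :
  (r \in Rgrp (pact q S)) = ((q * r * q^-1)%g \in Rgrp S).
Proof.
rewrite !inE; apply/forallP/forallP => H x.
  move: (H (q x)); rewrite !row_of_pact !permM permK.
  by [].
move: (H (q^-1 x)%g); rewrite !row_of_pact !permM permKV.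
by [].
Qed.

Lemma Cgrp_pact n (q : {perm 'I_n}) (S : numbering n) r :
  (r \in Cgrp (pact q S)) = ((q * r * q^-1)%g \in Cgrp S).
Proof.
rewrite !inE; apply/forallP/forallP => H x.
  move: (H (q x)); rewrite !col_of_pact !permM permK.
  by [].
move: (H (q^-1 x)%g); rewrite !col_of_pact !permM permKV.
by [].
Qed.

Lemma pact_inj n (U : numbering n) (s s' : {perm 'I_n}) :
  (forall x, x \in flatten U) -> pact s U = pact s' U -> s = s'.
Proof.
move=> full /eq_in_map E; apply/permP => x.
case/flattenP: (full x) => r rU xr.
by move: (E r rU) => /eq_in_map E'; apply: E'.
Qed.

Lemma sigmaTS_spec n (S T : numbering n) :
  (exists s, pact s S = T) -> pact (sigmaTS S T) S = T.
Proof.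
rewrite /sigmaTS; case: pickP => [s /eqP //| H] [s hs].
by move: (H s); rewrite hs eqxx.
Qed.

Lemma full_pact n (q : {perm 'I_n}) (S : numbering n) :
  (forall x, x \in flatten S) -> forall x, x \in flatten (pact q S).
Proof.
move=> full x; rewrite /pact -(permKV q x).
case/flattenP: (full (q^-1 x)%g) => r rS xr.
apply/flattenP; exists (map q r); first by apply: map_f.
by apply: map_f.
Qed.

Lemma vST_pact n (q : {perm 'I_n}) (S T : numbering n) p :
  (forall x, x \in flatten S) -> (exists s, pact s S = T) ->
  vST (pact q S) T p = \sum_(z in Cgrp S) \sum_(r in Rgrp S)
      sgnp z * ((q^-1 * (r * (z * sigmaTS S T)))%g == p)%:R.
Proof.
move=> full ex.
have sU : sigmaTS (pact q S) T = (q^-1 * sigmaTS S T)%g.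
  apply: (pact_inj (full_pact q full)).
  have e : pact (q^-1 * sigmaTS S T)%g (pact q S) = T.
    by rewrite pactM mulgA mulgV mul1g sigmaTS_spec.
  by rewrite e sigmaTS_spec //; exists (q^-1 * sigmaTS S T)%g.
rewrite vSTE sU (reindex_inj (@conjg_inj _ q)) /=.
apply: eq_big => [z|z zC]; first by rewrite Cgrp_pact conj_back.
rewrite (reindex_inj (@conjg_inj _ q)) /=.
apply: eq_big => [r|r rR]; first by rewrite Rgrp_pact conj_back.
rewrite /sgnp odd_permJ; congr (_ * (_ == _)%:R).
by rewrite !conjgE !mulgA !mulgK.
Qed.

Lemma row_of_nth n (S : numbering n) k x :
  uniq (flatten S) -> x \in nth [::] S k -> row_of S x = k.
Proof.
elim: S k => [|a S IH] [|k] /=; rewrite ?nth_nil // => u xk.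
  by rewrite /row_of /= xk.
rewrite cat_uniq in u; case/and3P: u => ua nh uS.
have xf : x \in flatten S.
  apply/flattenP; exists (nth [::] S k) => //; apply: mem_nth.
  by case: ltnP xk => // h; rewrite nth_default.
have xa : x \notin a by apply: contra nh => xa; apply/hasP; exists x.
by rewrite /row_of /= (negbTE xa) -/(row_of S x) (IH k).
Qed.

Lemma in_row_of n (S : numbering n) x :
  x \in flatten S -> x \in nth [::] S (row_of S x).
Proof.
move=> /flattenP [r rS xr]; rewrite /row_of.
by apply: (@nth_find _ [::] (fun r => x \in r)); apply/hasP; exists r.
Qed.

Lemma uniq_row n (S : numbering n) k : uniq (flatten S) -> uniq (nth [::] S k).
Proof.
elim: S k => [|a S IH] [|k] /=; rewrite ?nth_nil // cat_uniq => /and3P[ua _ uS] //.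
exact: IH.
Qed.

Lemma col_of_nth n (S : numbering n) k c x0 :
  uniq (flatten S) -> (c < size (nth [::] S k))%N ->
  col_of S (nth x0 (nth [::] S k) c) = c.
Proof.
move=> u hc; rewrite /col_of (row_of_nth u (mem_nth _ hc)).
by rewrite index_uniq // uniq_row.
Qed.

Lemma Rgrp_group_set n (S : numbering n) : group_set (Rgrp S).
Proof.
apply/group_setP; split; first by rewrite inE; apply/forallP => x; rewrite perm1.
move=> a b; rewrite !inE => /forallP Ha /forallP Hb; apply/forallP => x.
by rewrite permM (eqP (Hb _)) (eqP (Ha _)).
Qed.
Canonical Rgrp_group n (S : numbering n) := group (Rgrp_group_set S).

Lemma Cgrp_group_set n (S : numbering n) : group_set (Cgrp S).
Proof.
apply/group_setP; split; first by rewrite inE; apply/forallP => x; rewrite perm1.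
move=> a b; rewrite !inE => /forallP Ha /forallP Hb; apply/forallP => x.
by rewrite permM (eqP (Hb _)) (eqP (Ha _)).
Qed.
Canonical Cgrp_group n (S : numbering n) := group (Cgrp_group_set S).

Definition fG n (S : numbering n) (sg p g : {perm 'I_n}) : algC :=
  \sum_(z in Cgrp S) \sum_(r in Rgrp S) sgnp z * ((g * (r * (z * sg)))%g == p)%:R.

Lemma fG_R n (S : numbering n) sg p g h : h \in Rgrp S ->
  fG S sg p (g * h)%g = fG S sg p g.
Proof.
move=> hR; rewrite /fG; apply: eq_bigr => z _.
rewrite (reindex_inj (mulgI h^-1%g)) /=; apply: eq_big => [r|r _].
  by rewrite groupMl ?groupV.
by rewrite !mulgA mulgK.
Qed.

Lemma perm_onS' (T : finType) (A B : {set T}) (s : {perm T}) :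
  perm_on A s -> A \subset B -> perm_on B s.
Proof. by move=> h sub; apply: subset_trans h sub. Qed.

Lemma row_of_R n (S : numbering n) r x : r \in Rgrp S -> row_of S (r x) = row_of S x.
Proof. by rewrite inE => /forallP /(_ x) /eqP. Qed.

Lemma sgnp_tpermM n (a b : 'I_n) z : a != b -> sgnp (tperm a b * z)%g = - sgnp z.
Proof. by move=> ab; rewrite /sgnp odd_mul_tperm ab addTb signrN. Qed.

Lemma garnir0 n (S : numbering n) i (K : {set 'I_n}) y0 sg p :
  uniq (flatten S) -> (forall x, x \in flatten S) ->
  (size (nth [::] S i.+1) <= size (nth [::] S i))%N ->
  y0 \in K -> K \subset [set x in nth [::] S i.+1] ->
  \sum_(g | perm_on ([set x in nth [::] S i] :|: K) g) fG S sg p g = 0.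
Proof.
move=> u full hsz y0K KR.
set Ri := nth [::] S i; set Ri1 := nth [::] S i.+1.
set X := [set x in Ri] :|: K.
rewrite /fG exchange_big /=.
under eq_bigr do rewrite exchange_big /=.
rewrite exchange_big /=; apply: big1 => r rR.
have y0R : y0 \in Ri1 by move/subsetP: KR => /(_ _ y0K); rewrite inE.
have ry0 : r y0 \in Ri1.
  have := in_row_of (full (r y0)); rewrite (row_of_R _ rR) (row_of_nth u y0R) //.
set c := col_of S (r y0).
have cE : c = index (r y0) Ri1 by rewrite /c /col_of (row_of_nth u ry0).
have hc : (c < size Ri)%N by apply: leq_trans hsz; rewrite cE index_mem.
set a := nth y0 Ri c.
have aR : a \in Ri by apply: mem_nth.
have ca : col_of S a = c by rewrite col_of_nth.
set xr := (r^-1 a)%g.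
have rxr : r xr = a by rewrite permKV.
have xrR : xr \in Ri.
  have := in_row_of (full xr).
  by rewrite -(row_of_R _ rR) rxr (row_of_nth u aR).
have rowxr : row_of S xr = i by rewrite (row_of_nth u xrR).
have rowy0 : row_of S y0 = i.+1 by rewrite (row_of_nth u y0R).
have xy : xr != y0 by apply/eqP => e; move: rowxr; rewrite e rowy0 => /esym /n_Sn.
set tau := tperm xr y0; set tau' := tperm a (r y0).
have tauX : perm_on X tau.
  apply: perm_onS' (tperm_on _ _) _; apply/subsetP => x.
  by rewrite !inE => /orP[] /eqP ->; rewrite ?xrR ?y0K ?orbT.
have tau'C : tau' \in Cgrp S.
  rewrite inE; apply/forallP => x; case: tpermP => [->|->|_ _] //.
    by rewrite ca.
  by rewrite ca.
have a_ry0 : a != r y0.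
  apply/eqP => e; move: (row_of_nth u aR); rewrite e (row_of_nth u ry0).
  by [apply: n_Sn | move=> /esym; apply: n_Sn].
have key : (tau * r * tau')%g = r.
  apply/permP => x; rewrite !permM; case: (tpermP xr y0 x) => [->|->|hx1 hx2].
  - by rewrite tpermR rxr.
  - by rewrite rxr /tau' tpermL.
  - rewrite /tau' tpermD //; first by rewrite -rxr (inj_eq perm_inj); apply/eqP => e; apply: hx1.
    by rewrite (inj_eq perm_inj); apply/eqP => e; apply: hx2.
set Z := \sum_(z in Cgrp S) _.
have E : Z = - Z.
  rewrite {1}/Z (reindex_inj (mulgI tau')) /= -sumrN.
  apply: eq_big => [z|z zC]; first by rewrite groupMl.
  rewrite (reindex_inj (mulIg tau)) /= -sumrN.
  apply: eq_big => [g|g gX].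
    apply/idP/idP => h; last by apply: perm_onM.
    by rewrite -(mulgK tau g); apply: perm_onM => //; apply: perm_onV.
  rewrite sgnp_tpermM // mulNr; congr (- (_ * (_ == _)%:R)).
  by rewrite !mulgA -(mulgA g tau r) -(mulgA g) key.
have : Z *+ 2 == 0 by rewrite mulr2n {1}E addNr.
by rewrite mulrn_eq0 /= => /eqP.
Qed.

Definition swap_ok (T : eqType) (s t : seq T) :=
  [&& uniq s, uniq t, size s == size t & all (fun y => y \notin t) s].

Definition swapf (T : finType) (s t : seq T) (x : T) : T :=
  if swap_ok s t then
    (if x \in s then nth x t (index x s) else if x \in t then nth x s (index x t) else x)
  else x.

Lemma swapfK (T : finType) (s t : seq T) : involutive (swapf s t).
Proof.
move=> x; rewrite /swapf; case ok: (swap_ok s t) => //.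
case/and4P: ok => us ut /eqP sz /allP dis.
case xs: (x \in s).
  have yt : nth x t (index x s) \in t by apply: mem_nth; rewrite -sz index_mem.
  have ys : nth x t (index x s) \notin s.
    by apply: contraL yt => h; apply: dis.
  by rewrite (negbTE ys) yt index_uniq ?nth_index // -sz index_mem.
case xt: (x \in t) => /=; last by rewrite xs xt.
have ys : nth x s (index x t) \in s by apply: mem_nth; rewrite sz index_mem.
by rewrite ys index_uniq ?nth_index // sz index_mem.
Qed.

Definition swapperm (T : finType) (s t : seq T) : {perm T} :=
  perm (can_inj (swapfK s t)).

Lemma swapperm_in (T : finType) (s t : seq T) x : swap_ok s t -> x \in s ->
  swapperm s t x = nth x t (index x s).
Proof. by move=> ok xs; rewrite permE /swapf ok xs. Qed.

Lemma swapperm_out (T : finType) (s t : seq T) x : x \notin s -> x \notin t ->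
  swapperm s t x = x.
Proof. by move=> xs xt; rewrite permE /swapf (negbTE xs) (negbTE xt); case: ifP. Qed.

Lemma swap_ok_sym (T : eqType) (s t : seq T) : swap_ok s t -> swap_ok t s.
Proof.
case/and4P => us ut /eqP sz /allP dis; apply/and4P; split => //; first by rewrite sz.
by apply/allP => y yt; apply: contraL yt; apply: dis.
Qed.

Lemma swapperm_sym (T : finType) (s t : seq T) : swap_ok s t ->
  swapperm s t = swapperm t s.
Proof.
move=> ok; have okt := swap_ok_sym ok; apply/permP => x; rewrite !permE /swapf ok okt.
case/and4P: ok => us ut /eqP sz /allP dis.
case xs: (x \in s); case xt: (x \in t) => //.
by move: (dis _ xs); rewrite xt.
Qed.

Lemma swapperm_s (T : finType) (s t : seq T) : swap_ok s t ->
  map (swapperm s t) s = t.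
Proof.
move=> ok; have := ok; case/and4P => us ut /eqP sz _.
case: s ok us sz => [|x0 s'] ok us sz; first by case: t sz {ok ut}.
apply: (@eq_from_nth _ x0); first by rewrite size_map.
move=> k; rewrite size_map => hk.
rewrite (nth_map x0) // swapperm_in ?mem_nth // index_uniq //.
by apply: set_nth_default; rewrite -sz.
Qed.

Lemma swapperm_t (T : finType) (s t : seq T) : swap_ok s t ->
  map (swapperm s t) t = s.
Proof. by move=> ok; rewrite swapperm_sym // swapperm_s // swap_ok_sym. Qed.

Lemma swapperm_on (T : finType) (s t : seq T) :
  perm_on [set x | (x \in s) || (x \in t)] (swapperm s t).
Proof.
apply/subsetP => x; rewrite !inE; apply: contraR; rewrite negb_or => /andP[xs xt].
by rewrite swapperm_out.
Qed.

Lemma preim_mul (T : finType) (a b : {perm T}) (A : {set T}) :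
  (a * b)%g @^-1: A = a @^-1: (b @^-1: A).
Proof. by apply/setP => x; rewrite !inE permM. Qed.

Lemma exists_perm_pre (T : finType) (X A Y : {set T}) :
  A \subset X -> Y \subset X -> #|Y| = #|A| ->
  exists c : {perm T}, perm_on X c /\ c @^-1: A = Y.
Proof.
move=> AX YX cYA.
set s := enum (Y :\: A); set t := enum (A :\: Y).
have ok : swap_ok s t.
  apply/and4P; split; rewrite ?enum_uniq //.
    by rewrite -!cardE !cardsD cYA setIC.
  by apply/allP => x; rewrite !mem_enum !inE => /andP[xA xY]; rewrite xY.
exists (swapperm s t); split.
  apply: perm_onS' (swapperm_on _ _) _; apply/subsetP => x.
  rewrite !inE !mem_enum !inE => /orP[/andP[_ xY]|/andP[_ xA]].
    by move/subsetP: YX; apply.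
  by move/subsetP: AX; apply.
apply/setP => x; rewrite !inE.
case xs: (x \in s).
  have := map_f (swapperm s t) xs; rewrite swapperm_s //.
  by move: xs; rewrite !mem_enum !inE => /andP[_ ->] /andP[_ ->].
case xt: (x \in t).
  have := map_f (swapperm t s) xt; rewrite swapperm_s; last exact: swap_ok_sym.
  rewrite -swapperm_sym //.
  by move: xt; rewrite !mem_enum !inE => /andP[/negbTE -> _] /andP[/negbTE -> _].
rewrite swapperm_out ?xs ?xt //.
move: xs xt; rewrite !mem_enum !inE.
by case: (x \in A); case: (x \in Y).
Qed.


Definition Rset n (S : numbering n) k : {set 'I_n} := [set x in nth [::] S k].

Lemma R_of_perm_on n (S : numbering n) i h :
  uniq (flatten S) -> perm_on (Rset S i :|: Rset S i.+1) h ->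
  (forall x, x \in Rset S i -> h x \in Rset S i) -> h \in Rgrp S.
Proof.
move=> u hW hRi; rewrite inE; apply/forallP => x.
case xW: (x \in Rset S i :|: Rset S i.+1); last by rewrite (out_perm hW) ?xW.
case xi: (x \in Rset S i).
  have hxi := hRi _ xi; move: xi hxi; rewrite !inE => b a.
  by rewrite (row_of_nth u a) (row_of_nth u b).
have xi1 : x \in Rset S i.+1 by move: xW; rewrite inE xi.
have hxW : h x \in Rset S i :|: Rset S i.+1 by rewrite perm_closed.
have him : h @: Rset S i = Rset S i.
  apply/eqP; rewrite eqEcard card_imset ?leqnn ?andbT; last by apply: perm_inj.
  by apply/subsetP => y /imsetP [z zi ->]; apply: hRi.
case hxi: (h x \in Rset S i).
  by move: hxi; rewrite -{1}him mem_imset ?xi //; apply: perm_inj.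
have hxi1 : h x \in Rset S i.+1 by move: hxW; rewrite inE hxi.
by move: hxi1 xi1; rewrite !inE => a b; rewrite (row_of_nth u a) (row_of_nth u b).
Qed.

Lemma fG_class n (S : numbering n) i sg p g g' :
  uniq (flatten S) ->
  perm_on (Rset S i :|: Rset S i.+1) g -> perm_on (Rset S i :|: Rset S i.+1) g' ->
  g @^-1: Rset S i = g' @^-1: Rset S i -> fG S sg p g = fG S sg p g'.
Proof.
move=> u hg hg' e; rewrite -(mulKVg g g') fG_R //.
apply: (R_of_perm_on (i := i)) => //; first by apply: perm_onM => //; apply: perm_onV.
move=> x xi; rewrite permM.
have : (g^-1 x)%g \in g @^-1: Rset S i by rewrite inE permKV.
by rewrite e inE.
Qed.

Definition Vf n (S : numbering n) i sg p (Y : {set 'I_n}) : algC :=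
  fG S sg p (odflt 1%g [pick g | perm_on (Rset S i :|: Rset S i.+1) g
                                  && (g @^-1: Rset S i == Y)]).

Lemma Vclass n (S : numbering n) i sg p g : uniq (flatten S) ->
  perm_on (Rset S i :|: Rset S i.+1) g -> Vf S i sg p (g @^-1: Rset S i) = fG S sg p g.
Proof.
move=> u hg; rewrite /Vf; case: pickP => [g' /andP[hg' /eqP e]|H] /=.
  by apply: (fG_class (i := i)).
by have := H g; rewrite hg eqxx.
Qed.

Lemma class_sum n (S : numbering n) i sg p (K : {set 'I_n}) :
  uniq (flatten S) -> K \subset Rset S i.+1 ->
  \sum_(g | perm_on (Rset S i :|: K) g) fG S sg p g =
  (#|[set g | perm_on (Rset S i :|: K) g && (g @^-1: Rset S i == Rset S i)]|)%:R *
  \sum_(Y : {set 'I_n} | (Y \subset Rset S i :|: K) && (#|Y| == #|Rset S i|)) Vf S i sg p Y.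
Proof.
move=> u KR; set X := Rset S i :|: K; set Ri := Rset S i.
have XW : X \subset Ri :|: Rset S i.+1 by apply: setUS.
rewrite (partition_big (fun g : {perm 'I_n} => g @^-1: Ri)
          (fun Y : {set 'I_n} => (Y \subset X) && (#|Y| == #|Ri|))) /=; last first.
  move=> g hg; rewrite card_preimset ?eqxx ?andbT; last by apply: perm_inj.
  apply/subsetP => x; rewrite inE; apply: contraLR => xX.
  rewrite (out_perm hg xX); apply: contra xX => xi.
  by rewrite inE xi.
rewrite mulr_sumr; apply: eq_bigr => Y /andP[YX /eqP cY].
rewrite (eq_bigr (fun _ => Vf S i sg p Y)); last first.
  move=> g /andP[hg /eqP <-]; rewrite Vclass //; apply: perm_onS' hg XW.
rewrite sumr_const mulr_natl; congr (_ *+ _).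
have [c [hc ec]] := exists_perm_pre (subsetUl Ri K) YX cY.
rewrite -[RHS](card_imset _ (mulgI c)); apply: eq_card => g.
apply/idP/imsetP => [/andP[hg /eqP eg]|[g0]].
  exists (c^-1 * g)%g; last by rewrite mulKVg.
  rewrite inE perm_onM ?perm_onV //=; apply/eqP/setP => x.
  rewrite preim_mul eg -ec !inE permKV //.
rewrite inE => /andP[hg0 /eqP eg0] ->.
by apply/andP; split; [exact: perm_onM | rewrite preim_mul eg0 ec].
Qed.

Lemma zero_of_neg (x : algC) : x = - x -> x = 0.
Proof.
move=> E; have : x *+ 2 == 0 by rewrite mulr2n {1}E addNr.
by rewrite mulrn_eq0 /= => /eqP.
Qed.

Lemma alt_sum (T : finType) (A J : {set T}) : A \subset J ->
  \sum_(K : {set T} | (A \subset K) && (K \subset J)) (-1) ^+ #|K| =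
  (if A == J then (-1) ^+ #|J| else 0 : algC).
Proof.
move=> AJ; case: eqP => [->|neq].
  rewrite (big_pred1 J) // => K /=; by rewrite eqEsubset andbC.
have [x xJ xA] : exists2 x, x \in J & x \notin A.
  apply/subsetPn; apply/negP => JA; apply: neq; apply/eqP.
  by rewrite eqEsubset AJ JA.
apply: zero_of_neg.
set tg := fun K : {set T} => if x \in K then K :\ x else x |: K.
have tgK : involutive tg.
  move=> K; rewrite /tg; case xK: (x \in K).
    by rewrite !inE eqxx /= setD1K.
  by rewrite setU11 setU1K ?xK.
rewrite {1}(reindex_inj (can_inj tgK)) -sumrN; apply: eq_big => [K|K /andP[AK KJ]].
  rewrite /tg; case xK: (x \in K).
    rewrite subsetD1 xA andbT; congr (_ && _); apply/idP/idP => h.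
      by rewrite -(setD1K xK) subUset sub1set xJ.
    by apply: subset_trans (subsetDl _ _) h.
  rewrite subUset sub1set xJ /=; congr (_ && _); apply/idP/idP => h.
    by apply/subsetP => y yA; move/subsetP: h => /(_ y yA); rewrite !inE => /orP[/eqP e|//]; move: yA; rewrite e (negbTE xA).
  by apply: subset_trans h (subsetUr _ _).
rewrite /tg; case xK: (x \in K).
  by rewrite (cardsD1 x K) xK add1n exprS mulN1r opprK.
by rewrite cardsU1 xK add1n exprS mulN1r.
Qed.

Lemma mobius (T : finType) (V : {set T} -> algC) (Ri J : {set T}) :
  (forall y, y \in Ri -> y \notin J) ->
  (forall K : {set T}, K \subset J -> K != set0 ->
     \sum_(Y : {set T} | (Y \subset Ri :|: K) && (#|Y| == #|Ri|)) V Y = 0) ->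
  \sum_(Y : {set T} | [&& Y \subset Ri :|: J, J \subset Y & #|Y| == #|Ri|]) V Y
    = (-1) ^+ #|J| * V Ri.
Proof.
move=> dis HG.
set G := fun K : {set T} =>
  \sum_(Y : {set T} | (Y \subset Ri :|: K) && (#|Y| == #|Ri|)) V Y.
have H1 : \sum_(K : {set T} | K \subset J) (-1) ^+ #|K| * G K = V Ri.
  rewrite (bigD1 set0) ?sub0set //= [X in _ + X]big1 ?addr0; last first.
    by move=> K /andP[KJ K0]; rewrite /G HG // mulr0.
  rewrite cards0 expr0 mul1r /G setU0 (big_pred1 Ri) // => Y /=.
  apply/idP/idP => [/andP[YR /eqP cY]|/eqP ->]; last by rewrite subxx eqxx.
  by rewrite eqEcard YR cY leqnn.
have H2 : \sum_(K : {set T} | K \subset J) (-1) ^+ #|K| * G K =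
   (-1) ^+ #|J| * \sum_(Y : {set T} | [&& Y \subset Ri :|: J, J \subset Y & #|Y| == #|Ri|]) V Y.
  rewrite (eq_bigr (fun K => \sum_(Y : {set T})
      (if (Y \subset Ri :|: K) && (#|Y| == #|Ri|) then (-1) ^+ #|K| * V Y else 0)));
    last by move=> K _; rewrite /G mulr_sumr big_mkcond.
  rewrite exchange_big /= mulr_sumr [RHS]big_mkcond /=; apply: eq_bigr => Y _.
  case cY: (#|Y| == #|Ri|); last first.
    by rewrite !andbF big1 // => K _; rewrite andbF.
  case YJ: (Y \subset Ri :|: J) => /=; last first.
    apply: big1 => K KJ; rewrite andbT; case: ifP => // YK.
    by move: YJ; rewrite (subset_trans YK) // setUS.
  rewrite andbT -big_mkcondr /= -mulr_suml.
  rewrite (eq_bigl (fun K : {set T} => (Y :&: J \subset K) && (K \subset J))); last first.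
    move=> K /=; rewrite andbT; case KJ: (K \subset J); rewrite ?andbF ?andbT //.
    apply/idP/idP => h.
      apply/subsetP => y; rewrite inE => /andP[yY yJ].
      move/subsetP: h => /(_ y yY); rewrite inE => /orP[yR|//].
      by move: (dis y yR); rewrite yJ.
    apply/subsetP => y yY; move/subsetP: YJ => /(_ y yY); rewrite !inE => /orP[->//|yJ].
    by move/subsetP: h => /(_ y) h; rewrite h ?orbT // inE yY yJ.
  rewrite alt_sum ?subsetIr //.
  have -> : (Y :&: J == J) = (J \subset Y) by apply/eqP/setIidPr.
  by case: (J \subset Y); rewrite ?mul0r // mulrC.
move: H2; rewrite H1 => ->.
by rewrite mulrA -exprMn mulrNN mulr1 expr1n mul1r.
Qed.

Lemma map_repl (A : eqType) (f : A -> A) (m : bitseq) (r : seq A) :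
  size m = size r -> all (fun y => f y == y) (mask (map negb m) r) ->
  map f r = repl m r (map f (mask m r)).
Proof.
elim: r m => [|x r IH] [|b m] //= [sz]; case: b => /=.
  by move=> H; rewrite -IH.
by case/andP => /eqP -> H; rewrite -IH.
Qed.

Lemma in_mask_neg (A : eqType) (m : bitseq) (r : seq A) x :
  uniq r -> size m = size r ->
  (x \in mask (map negb m) r) = (x \in r) && (x \notin mask m r).
Proof.
move=> ur sz; rewrite !in_mask //; case xr: (x \in r) => //=.
by rewrite (nth_map false) // sz index_mem.
Qed.

Lemma cnt_enum (N : nat) (B : {set 'I_N}) : count id [seq k \in B | k <- enum 'I_N] = #|B|.
Proof.
rewrite count_map cardE -size_filter /enum_mem -enumT -filter_predI.
by congr size; apply: eq_filter => x /=; rewrite [x \in 'I_N]inE andbT.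
Qed.

Lemma nth_enum_in (N : nat) (B : {set 'I_N}) (k : 'I_N) :
  nth false [seq k \in B | k <- enum 'I_N] k = (k \in B).
Proof. by rewrite (nth_map k) ?nth_ord_enum // size_enum_ord. Qed.

Lemma rows_eq n (S : numbering n) k k' y : uniq (flatten S) ->
  y \in nth [::] S k -> y \in nth [::] S k' -> k = k'.
Proof. by move=> u a b; rewrite -(row_of_nth u a) (row_of_nth u b). Qed.

Definition mB n (S : numbering n) i (B : {set 'I_(size (nth [::] S i))}) : bitseq :=
  [seq k \in B | k <- enum 'I_(size (nth [::] S i))].

Definition piB n (S : numbering n) i j (B : {set 'I_(size (nth [::] S i))}) :=
  swapperm (mask (mB B) (nth [::] S i)) (take j (nth [::] S i.+1)).

Lemma size_mB n (S : numbering n) i (B : {set 'I_(size (nth [::] S i))}) : size (@mB n S i B) = size (nth [::] S i).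
Proof. by rewrite size_map size_enum_ord. Qed.

Lemma piB_ok n (S : numbering n) i j (B : {set 'I_(size (nth [::] S i))}) : uniq (flatten S) -> #|B| = j ->
  (j <= size (nth [::] S i.+1))%N ->
  swap_ok (mask (@mB n S i B) (nth [::] S i)) (take j (nth [::] S i.+1)).
Proof.
move=> u cB hj; apply/and4P; split.
- by apply: mask_uniq; apply: uniq_row.
- by apply: take_uniq; apply: uniq_row.
- by rewrite size_mask ?size_mB // size_take_min /mB cnt_enum cB (minn_idPl hj).
- apply/allP => y /mem_mask yr; apply/negP => /mem_take yr1.
  by have := rows_eq u yr yr1 => /n_Sn.
Qed.

Lemma XiElt_pact n (S : numbering n) i j (B : {set 'I_(size (nth [::] S i))}) :
  uniq (flatten S) -> (i.+1 < size S)%N -> #|B| = j ->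
  (j <= size (nth [::] S i.+1))%N ->
  pact (@piB n S i j B) S = XiElt S i j B.
Proof.
move=> u hi cB hj; have ok := piB_ok u cB hj.
rewrite /XiElt /piB /pact /=.
rewrite -/(mB B).
set r := nth [::] S i; set r' := nth [::] S i.+1; set s := mask _ r; set t := take j r'.
have sr : {subset s <= r} by move=> y /mem_mask.
have tr' : {subset t <= r'} by move=> y /mem_take.
apply: (@eq_from_nth _ [::]).
  by rewrite size_map !size_set_nth (maxn_idPr (ltnW hi)) (maxn_idPr hi).
move=> k; rewrite size_map => hk; rewrite (nth_map [::]) // !nth_set_nth /=.
case: eqP => [->|nk1].
  rewrite -/r' -{1}(cat_take_drop j r') map_cat -/t (swapperm_t ok); congr (_ ++ _).
  apply: map_id_in => y yd; apply: swapperm_out.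
    apply/negP => /sr yr; have := rows_eq u yr (mem_drop yd) => /n_Sn //.
  have : uniq r' by apply: uniq_row.
  rewrite -{1}(cat_take_drop j r') cat_uniq => /and3P[_ /hasPn H _].
  exact: H.
rewrite nth_set_nth /=; case: (k =P i) => [->|nk].
  rewrite -/r (map_repl (size_mB B)) -/s ?(swapperm_s ok) //.
  apply/allP => y; rewrite in_mask_neg ?size_mB ?uniq_row // => /andP[yr yns].
  apply/eqP; apply: swapperm_out => //.
  apply/negP => /tr' yr1; have := rows_eq u yr yr1 => /n_Sn //.
apply: map_id_in => y yk; apply: swapperm_out.
  by apply/negP => /sr yr; apply: nk; apply: rows_eq u yk yr.
by apply/negP => /tr' yr; apply: nk1; apply: rows_eq u yk yr.
Qed.

Lemma swapperm_inv (T : finType) (s t : seq T) : ((swapperm s t)^-1)%g = swapperm s t.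
Proof.
apply/permP => x; apply: (@perm_inj _ (swapperm s t)); rewrite permKV.
by rewrite !permE swapfK.
Qed.

Lemma piB_on n (S : numbering n) i j (B : {set 'I_(size (nth [::] S i))}) :
  perm_on (Rset S i :|: Rset S i.+1) (@piB n S i j B).
Proof.
apply: perm_onS' (swapperm_on _ _) _; apply/subsetP => x; rewrite !inE.
by case/orP => [/mem_mask -> | /mem_take ->]; rewrite ?orbT.
Qed.

Lemma piB_preim n (S : numbering n) i j (B : {set 'I_(size (nth [::] S i))}) :
  uniq (flatten S) -> #|B| = j -> (j <= size (nth [::] S i.+1))%N ->
  (@piB n S i j B) @^-1: Rset S i =
  [set x in mask (map negb (mB B)) (nth [::] S i) ++ take j (nth [::] S i.+1)].
Proof.
move=> u cB hj; have ok := piB_ok u cB hj.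
set r := nth [::] S i; set r' := nth [::] S i.+1.
have ur : uniq r by apply: uniq_row.
apply/setP => x; rewrite !inE mem_cat in_mask_neg ?size_mB //.
rewrite /piB -/r -/r'; set s := mask _ r; set t := take j r'.
have dis : forall y, y \in r -> y \in r' -> False.
  by move=> y a b; have := rows_eq u a b => /n_Sn.
case xs: (x \in s).
  have := map_f (swapperm s t) xs; rewrite swapperm_s // => /mem_take y1.
  rewrite andbF /=.
  have -> : (x \in t) = false by apply/negP => /mem_take; apply: dis; apply: mem_mask xs.
  by apply/negP => y0; apply: (dis _ y0 y1).
case xt: (x \in t).
  have := map_f (swapperm t s) xt; rewrite swapperm_s; last exact: swap_ok_sym.
  by rewrite -swapperm_sym // orbT => /mem_mask ->.
by rewrite swapperm_out ?xs ?xt // andbT orbF.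
Qed.

Definition hBset n (S : numbering n) i j (B : {set 'I_(size (nth [::] S i))}) : {set 'I_n} :=
  [set x in mask (map negb (mB B)) (nth [::] S i) ++ take j (nth [::] S i.+1)].

Lemma hB_card n (S : numbering n) i j (B : {set 'I_(size (nth [::] S i))}) :
  uniq (flatten S) -> (j <= size (nth [::] S i.+1))%N ->
  #|@hBset n S i j B| = (size (nth [::] S i) - #|B| + j)%N.
Proof.
move=> u hj; set r := nth [::] S i; set r' := nth [::] S i.+1.
have dis : forall y, y \in r -> y \in r' -> False.
  by move=> y a b; have := rows_eq u a b => /n_Sn.
have uc : uniq (mask (map negb (mB B)) r ++ take j r').
  rewrite cat_uniq mask_uniq ?take_uniq ?uniq_row //= andbT.
  by apply/hasPn => y /mem_take yr'; apply/negP => /mem_mask yr; apply: (dis y).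
rewrite /hBset cardsE (card_uniqP uc).
rewrite size_cat size_mask; last by rewrite size_map size_mB.
rewrite size_take_min (minn_idPl hj) count_map.
have c1 : count id (mB B) = #|B| by apply: cnt_enum.
have c2 : (count id (mB B) + count (predC id) (mB B) = size r)%N.
  by rewrite count_predC size_mB.
have c3 : count (preim negb id) (mB B) = count (predC id) (mB B).
  by apply: eq_count.
rewrite c3; move: c1 c2; move: (count id (mB B)) (count (predC id) (mB B)) => a b.
move: #|B| => c; move: (size r) => N; lia.
Qed.

Lemma reindexB n (S : numbering n) i j (V : {set 'I_n} -> algC) :
  uniq (flatten S) -> (j <= size (nth [::] S i.+1))%N ->
  (j <= size (nth [::] S i))%N ->
  \sum_(B : {set 'I_(size (nth [::] S i))} | #|B| == j) V (@hBset n S i j B) =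
  \sum_(Y : {set 'I_n} | [&& Y \subset Rset S i :|: [set x in take j (nth [::] S i.+1)],
         [set x in take j (nth [::] S i.+1)] \subset Y & #|Y| == #|Rset S i|]) V Y.
Proof.
move=> u hj hj'.
have ur : uniq (nth [::] S i) by apply: uniq_row.
have dis : forall y, y \in nth [::] S i -> y \in nth [::] S i.+1 -> False.
  by move=> y a b; have := rows_eq u a b => /n_Sn.
set hY := fun Y : {set 'I_n} =>
  [set k : 'I_(size (nth [::] S i)) | tnth (in_tuple (nth [::] S i)) k \notin Y].
symmetry; rewrite (reindex (@hBset n S i j)) /=.
  apply: eq_bigl => B.
  have -> : #|Rset S i| = size (nth [::] S i) by rewrite cardsE (card_uniqP ur).
  rewrite hB_card //.
  have -> : (@hBset n S i j B \subset Rset S i :|: [set x in take j (nth [::] S i.+1)]).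
    apply/subsetP => x; rewrite /hBset !inE mem_cat => /orP[/mem_mask ->//|->].
    by rewrite orbT.
  have -> : ([set x in take j (nth [::] S i.+1)] \subset @hBset n S i j B).
    by apply/subsetP => x; rewrite /hBset !inE mem_cat => ->; rewrite orbT.
  have cB : (#|B| <= size (nth [::] S i))%N.
    by rewrite -[X in (_ <= X)%N]card_ord max_card.
  move: cB hj'; move: #|B| => c; move: (size (nth [::] S i)) => N /=.
  by move=> h1 h2; apply/eqP/eqP; lia.
exists hY.
  move=> B _; apply/setP => k; rewrite /hY /hBset !inE mem_cat.
  set x := tnth _ k.
  have xr : x \in nth [::] S i by apply: mem_tnth.
  have -> : (x \in take j (nth [::] S i.+1)) = false.
    by apply/negP => /mem_take; apply: dis.
  rewrite orbF in_mask_neg ?size_mB // in_mask // xr /=.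
  have -> : index x (nth [::] S i) = k.
    by rewrite /x (tnth_nth x) index_uniq.
  by rewrite nth_enum_in negbK.
move=> Y; rewrite inE => /and3P[YRJ JY _]; apply/setP => x.
rewrite /hBset inE mem_cat in_mask_neg ?size_mB // in_mask //.
case xr: (x \in nth [::] S i) => /=.
  have -> : (x \in take j (nth [::] S i.+1)) = false.
    by apply/negP => /mem_take; apply: dis.
  have hk : (index x (nth [::] S i) < size (nth [::] S i))%N by rewrite index_mem.
  rewrite orbF (nth_enum_in _ (Ordinal hk)) /hY inE negbK.
  by rewrite (tnth_nth x) /= nth_index.
case xt: (x \in take j (nth [::] S i.+1)).
  by move/subsetP: JY => /(_ x); rewrite inE xt => ->.
apply/esym/negP => xY; move/subsetP: YRJ => /(_ x xY); rewrite !inE xr xt.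
by [].
Qed.

Lemma full_of_card n (s : seq 'I_n) : uniq s -> size s = n -> forall x, x \in s.
Proof.
move=> us sz x.
have H : #|s| = #|'I_n| by rewrite (card_uniqP us) sz card_ord.
have := (subset_cardP H); move/(_ (subset_predT _)) => E.
by rewrite E.
Qed.

Lemma map_nth_index (T : eqType) (s t : seq T) : uniq s -> size s = size t ->
  map (fun x => nth x t (index x s)) s = t.
Proof.
case: t => [|y0 t'] us sz; first by case: s us sz.
apply: (@eq_from_nth _ y0); first by rewrite size_map.
move=> k; rewrite size_map => hk; rewrite (nth_map y0) // index_uniq //.
by apply: set_nth_default; rewrite -sz.
Qed.

Lemma ex_pact n (S T : numbering n) : uniq (flatten S) -> uniq (flatten T) ->
  shape S = shape T -> (forall x, x \in flatten S) -> exists s, pact s S = T.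
Proof.
move=> uS uT sh full.
have sz : size (flatten S) = size (flatten T) by rewrite !size_flatten sh.
set f := fun x => nth x (flatten T) (index x (flatten S)).
have finj : injective f.
  move=> x y; rewrite /f => e.
  have hx : (index x (flatten S) < size (flatten T))%N by rewrite -sz index_mem.
  have hy : (index y (flatten S) < size (flatten T))%N by rewrite -sz index_mem.
  move: e; rewrite (set_nth_default x _ hy) => /eqP; rewrite nth_uniq // => /eqP e.
  by rewrite -(nth_index x (full x)) e nth_index.
exists (perm finj).
rewrite /pact -(flattenK S) map_reshape.
have -> : map (perm finj) (flatten S) = flatten T.
  rewrite -(map_nth_index uS sz); apply: eq_map => x; by rewrite permE.
by rewrite sh flattenK.
Qed.

Theorem corollary2p16 (n : nat) (lam : seq nat) (S T : numbering n)
  (i j : nat) :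
  is_partition n lam -> is_numbering lam S -> is_numbering lam T ->
  (i.+1 < size lam)%N -> (1 <= j)%N -> (j <= nth 0 lam i.+1)%N ->
  vST S T =
  gscale ((-1) ^+ j) (\sum_(B : {set 'I_(size (nth [::] S i))} | #|B| == j)
                 vST (XiElt S i j B) T).
Proof.
move=> hp hS hT hi hj1 hjl.
case/and3P: hp => srt pos /eqP sumlam.
case/andP: hS => /eqP shS uS; case/andP: hT => /eqP shT uT.
have szS : size S = size lam by rewrite -shS size_map.
have szrow : forall k, size (nth [::] S k) = nth 0 lam k.
  move=> k; rewrite -shS; case: (ltnP k (size S)) => h.
    by rewrite (nth_map [::]).
  by rewrite !nth_default ?size_map.
have fullS : forall x, x \in flatten S.
  by apply: full_of_card; rewrite // size_flatten shS.
have ex : exists s, pact s S = T by apply: ex_pact => //; rewrite shS shT.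
have hi' : (i.+1 < size S)%N by rewrite szS.
have hle : (nth 0 lam i.+1 <= nth 0 lam i)%N.
  have := @sorted_leq_nth _ geq _ _ 0 lam srt i i.+1.
  rewrite !inE => H; apply: H => //.
  - by move=> a b c h1 h2; apply: leq_trans h2 h1.
  - by move=> a; apply: leqnn.
  - by apply: ltnW hi.
have hsz : (size (nth [::] S i.+1) <= size (nth [::] S i))%N by rewrite !szrow.
have hj : (j <= size (nth [::] S i.+1))%N by rewrite szrow.
have hj' : (j <= size (nth [::] S i))%N by apply: leq_trans hj hsz.
apply/ffunP => p; rewrite [in RHS]ffunE [in RHS]sum_ffunE.
set sg := sigmaTS S T; set V := Vf S i sg p.
have L : vST S T p = V (Rset S i).
  have -> : Rset S i = (1%g : {perm 'I_n}) @^-1: Rset S i.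
    by apply/setP => x; rewrite !inE perm1.
  rewrite /V Vclass ?perm_on1 // vSTE /fG; apply: eq_bigr => z _.
  by apply: eq_bigr => r0 _; rewrite mul1g.
have R : forall B : {set 'I_(size (nth [::] S i))}, #|B| == j ->
    vST (XiElt S i j B) T p = V (@hBset n S i j B).
  move=> B /eqP cB; rewrite -(XiElt_pact uS hi' cB hj) vST_pact //.
  rewrite /hBset -(piB_preim uS cB hj) /V Vclass ?piB_on // /fG /piB swapperm_inv.
  by [].
rewrite (eq_bigr (fun B => V (@hBset n S i j B))) //.
rewrite reindexB // mobius.
- have -> : #|[set x in take j (nth [::] S i.+1)]| = j.
    by rewrite cardsE (card_uniqP (take_uniq _ (uniq_row _ uS))) size_take_min (minn_idPl hj).
  by rewrite L mulrA -exprMn mulrNN mulr1 expr1n mul1r.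
- move=> y; rewrite !inE => yr; apply/negP => /mem_take yr1.
  by have := rows_eq uS yr yr1 => /n_Sn.
move=> K KJ /set0Pn [y0 y0K].
have KR : K \subset Rset S i.+1.
  apply: subset_trans KJ _; apply/subsetP => x; rewrite !inE; apply: mem_take.
have e : 0 = (#|[set g | perm_on (Rset S i :|: K) g && (g @^-1: Rset S i == Rset S i)]|)%:R *
  \sum_(Y : {set 'I_n} | (Y \subset Rset S i :|: K) && (#|Y| == #|Rset S i|)) V Y.
  rewrite -(class_sum sg p uS KR); apply/esym.
  exact: (garnir0 sg p uS fullS hsz y0K KR).
move/eqP: e; rewrite eq_sym mulf_eq0 pnatr_eq0 => /orP[|/eqP //].
rewrite cards_eq0 => /eqP e0.
have : (1%g : {perm 'I_n}) \in set0.
  rewrite -e0 inE perm_on1 /=; apply/eqP/setP => x; by rewrite !inE perm1.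
by rewrite inE.
Qed.
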